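(* In the setting described in the context, for any $a\in\mathfrak{z}$ and any positive integer $n$, $$\mathrm{S}^r(a^n)=\sum_{i=0}^n r^{n-i}(1-r)^i\, a^i\ast \mathrm{S}(a^{n-i}),$$ where $\mathrm{S}=\mathrm{S}^1$. Equivalently, for a formal variable $u$, $\mathrm{S}^r\!\left(\frac{1}{1-au}\right)=\frac{1}{1-a(1-r)u}\ast \mathrm{S}\!\left(\frac{1}{1-aru}\right)$.
   Context: $\mathfrak{A}$ is a commutative $\mathbb{Q}$-algebra, $A$ a set of non-commutative letters, $\mathfrak{h}^1$ the non-commutative polynomial algebra over $\mathfrak{A}$ generated by $A$, and $\mathfrak{z}$ the $\mathfrak{A}$-span of $A$, equipped with a commutative (not necessarily unital) $\mathfrak{A}$-algebra product $\circ$. This acts on $\mathfrak{h}^1$ by $\mathfrak{A}$-linearity and $a\circ 1_w=0$, $a\circ(bw)=(a\circ b)w$ ($a,b\in A$, $w$ a word, $1_w$ the empty word). The harmonic product $\ast$ on $\mathfrak{h}^1$ is the $\mathfrak{A}$-bilinear product with $1_w\ast w=w\ast 1_w=w$ and $aw_1\ast bw_2=a(w_1\ast bw_2)+b(aw_1\ast w_2)+(a\circ b)(w_1\ast w_2)$ for $a,b\in A$ and words $w,w_1,w_2$ (extended $r$-linearly and to formal power series in $u$). For a variable $r$, $\mathrm{S}^r$ is the $\mathfrak{A}[r]$-linear map on $\mathfrak{h}^1[r]$ with $\mathrm{S}^r(1_w)=1_w$ and $\mathrm{S}^r(aw)=a\mathrm{S}^r(w)+r\,a\circ\mathrm{S}^r(w)$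 for $a\in A$ and words $w$; $\mathrm{S}:=\mathrm{S}^1$. Here $a^n$ denotes the $n$-fold concatenation power of $a$ ($a^0=1_w$). *)

(* Defs.v *)
From HB Require Import structures.
From mathcomp Require Import all_boot all_algebra.
From mathcomp Require Import finmap.
From mathcomp.multinomials Require Import monalg.

Set Implicit Arguments.
Unset Strict Implicit.
Unset Printing Implicit Defensive.

Import GRing.Theory.
Local Open Scope ring_scope.

Definition word (A : choiceType) := seq A.
HB.instance Definition _ (A : choiceType) := Choice.on (word A).

Lemma word_unit (A : choiceType) (x y : word A) :
  x ++ y = [::] -> x = [::] /\ y = [::].
Proof. by case: x => // ; case: y. Qed.

HB.instance Definition _ (A : choiceType) :=
  @Choice_isMonomialDef.Build (word A) [::] (@cat A) (@catA A) (@cat0s A)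
    (@cats0 A) (@word_unit A).

Section HarmonicDefs.
Variables (K : comRingType) (A : choiceType).

(* h^1 over K: the non-commutative polynomial algebra K<A>,
   finitely supported K-linear combinations of words; its ring
   product is concatenation. *)
Definition h1 := {malg K[word A]}.
Definition zsp := {malg K[A]}.

Definition letter (a : A) : h1 := << [:: a] : word A >>.

Definition zlift (z : zsp) : h1 := \sum_(x <- msupp z) z@_x *: letter x.

Definition circz (circ : A -> A -> zsp) (z1 z2 : zsp) : zsp :=
  \sum_(x <- msupp z1) \sum_(y <- msupp z2) (z1@_x * z2@_y) *: circ x y.

Variable circ : A -> A -> zsp.

Definition circ_w (x : A) (w : word A) : h1 :=
  match w with
  | [::] => 0
  | b :: w' => zlift (circ x b) * << (w' : word A) >>
  end.

Definition circ_act (z : zsp) (p : h1) : h1 :=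
  \sum_(x <- msupp z) \sum_(w <- msupp p) (z@_x * p@_w) *: circ_w x w.

Fixpoint harm_w (u : word A) : word A -> h1 :=
  match u with
  | [::] => fun v => << v >>
  | a :: u' =>
      fix hv (v : word A) : h1 :=
        match v with
        | [::] => << (a :: u' : word A) >>
        | b :: v' => letter a * harm_w u' v + letter b * hv v'
                     + zlift (circ a b) * harm_w u' v'
        end
  end.

Definition harm (p q : h1) : h1 :=
  \sum_(u <- msupp p) \sum_(v <- msupp q) (p@_u * q@_v) *: harm_w u v.

Fixpoint Sr_w (r : K) (w : word A) : h1 :=
  match w with
  | [::] => 1
  | a :: w' => letter a * Sr_w r w' + r *: circ_act << a >> (Sr_w r w')
  end.

Definition Sr (r : K) (p : h1) : h1 := \sum_(w <- msupp p) p@_w *: Sr_w r w.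

End HarmonicDefs.

(* Extension of scalars from R to R[r] = {poly R}. *)
Definition polyz (R : comRingType) (A : choiceType) (z : zsp R A)
  : zsp {poly R} A :=
  \sum_(x <- msupp z) << (z@_x)%:P *g x >>.

Definition polycirc (R : comRingType) (A : choiceType)
  (circ : A -> A -> zsp R A) : A -> A -> zsp {poly R} A :=
  fun a b => polyz (circ a b).

(* Main.v *)
Require Import Defs.
From HB Require Import structures.
From mathcomp Require Import all_boot all_algebra.
From mathcomp Require Import finmap.
From mathcomp.multinomials Require Import monalg.
Import GRing.Theory.
Local Open Scope ring_scope.

Section Gen.
Variables (K : comNzRingType).

Definition islin {U V : lmodType K} (f : U -> V) :=
  forall c u v, f (c *: u + v) = c *: f u + f v.

Section IsLin.
Variables (U V : lmodType K) (f : U -> V) (hf : islin f).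
Lemma islin0 : f 0 = 0.
Proof.
have H := hf 1 0 0; rewrite !scale1r addr0 in H.
by apply: (addrI (f 0)); rewrite addr0 -H.
Qed.
Lemma islinD u v : f (u + v) = f u + f v.
Proof. by have := hf 1 u v; rewrite !scale1r. Qed.
Lemma islinZ c u : f (c *: u) = c *: f u.
Proof. by have := hf c u 0; rewrite !addr0 islin0 addr0. Qed.
Lemma islin_sum I (r : seq I) (P : pred I) F :
  f (\sum_(i <- r | P i) F i) = \sum_(i <- r | P i) f (F i).
Proof. exact: (big_morph f islinD islin0). Qed.
End IsLin.
Arguments islin0 {U V f} hf.
Arguments islinD {U V f} hf u v.
Arguments islinZ {U V f} hf c u.
Arguments islin_sum {U V f} hf {I} r P F.

Lemma islin_add (U V : lmodType K) (f g : U -> V) :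
  islin f -> islin g -> islin (fun x => f x + g x).
Proof.
move=> hf hg c u v; rewrite hf hg scalerDr.
by rewrite -!addrA; congr (_ + _); rewrite addrCA.
Qed.
Lemma islin_sub (U V : lmodType K) (f g : U -> V) :
  islin f -> islin g -> islin (fun x => f x - g x).
Proof.
move=> hf hg c u v; rewrite hf hg scalerBr opprD.
by rewrite -!addrA; congr (_ + _); rewrite addrCA.
Qed.
Lemma islin_scale (U V : lmodType K) (f : U -> V) (d : K) :
  islin f -> islin (fun x => d *: f x).
Proof. by move=> hf c u v; rewrite hf scalerDr !scalerA mulrC. Qed.
Lemma islin_cst0 (U V : lmodType K) : islin (fun _ : U => (0 : V)).
Proof. by move=> c u v; rewrite scaler0 addr0. Qed.

Lemma monU_scale (X : choiceType) (c : K) (k : X) :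
  << c *g k >> = c *: << k >> :> {malg K[X]}.
Proof. by apply/malgP => k'; rewrite mcoeffZ !mcoeffU mulr_natr. Qed.

Lemma islin_ext (X : choiceType) (V : lmodType K) (f g : {malg K[X]} -> V) :
  islin f -> islin g -> (forall x, f << x >> = g << x >>) -> forall p, f p = g p.
Proof.
move=> hf hg e p; rewrite (monalgE p) (islin_sum hf) (islin_sum hg).
by apply: eq_bigr => x _; rewrite monU_scale (islinZ hf) (islinZ hg) e.
Qed.

Definition lin {X : choiceType} {V : lmodType K} (g : X -> V) (p : {malg K[X]}) : V :=
  \sum_(x <- msupp p) p@_x *: g x.

Lemma linEw {X : choiceType} {V : lmodType K} (g : X -> V) {p d} :
  (msupp p `<=` d)%fset -> lin g p = \sum_(x <- d) p@_x *: g x.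
Proof.
move=> le; rewrite /lin (big_fset_incl _ le) // => x _ /mcoeff_outdom ->.
by rewrite scale0r.
Qed.

Lemma lin_islin (X : choiceType) (V : lmodType K) (g : X -> V) : islin (lin g).
Proof.
move=> c p q.
have le : (msupp (c *: p + q) `<=` msupp p `|` msupp q)%fset.
  apply: fsubset_trans (msuppD_le _ _) _.
  by apply: fsetSU; apply: msuppZ_le.
rewrite (linEw g le) (linEw g (fsubsetUl (msupp p) (msupp q))) (linEw g (fsubsetUr (msupp p) (msupp q))).
rewrite scaler_sumr -big_split; apply: eq_bigr => x _.
by rewrite mcoeffD mcoeffZ scalerDl scalerA.
Qed.

Lemma linU (X : choiceType) (V : lmodType K) (g : X -> V) k : lin g << k >> = g k.
Proof. by rewrite /lin msuppU oner_eq0 big_seq_fset1 mcoeffUU scale1r. Qed.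

Definition lin2 {X Y : choiceType} {V : lmodType K} (F : X -> Y -> V)
  (p : {malg K[X]}) (q : {malg K[Y]}) : V :=
  \sum_(x <- msupp p) \sum_(y <- msupp q) (p@_x * q@_y) *: F x y.

Section Lin2.
Variables (X Y : choiceType) (V : lmodType K) (F : X -> Y -> V).
Lemma lin2_l p q : lin2 F p q = lin (fun x => lin (F x) q) p.
Proof.
rewrite /lin2 /lin; apply: eq_bigr => x _; rewrite scaler_sumr.
by apply: eq_bigr => y _; rewrite scalerA.
Qed.
Lemma lin2_r p q : lin2 F p q = lin (fun y => lin (F^~ y) p) q.
Proof.
rewrite /lin2 /lin exchange_big; apply: eq_bigr => y _; rewrite scaler_sumr.
by apply: eq_bigr => x _; rewrite scalerA mulrC.
Qed.
Lemma lin2Pl q : islin (fun p => lin2 F p q).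
Proof. by move=> c u v; rewrite !lin2_l lin_islin. Qed.
Lemma lin2Pr p : islin (lin2 F p).
Proof. by move=> c u v; rewrite !lin2_r lin_islin. Qed.
Lemma lin2U x y : lin2 F << x >> << y >> = F x y.
Proof. by rewrite lin2_l !linU. Qed.
End Lin2.
Arguments lin2_l {X Y V} F p q.
Arguments lin2_r {X Y V} F p q.
Arguments lin2Pl {X Y V} F q.
Arguments lin2Pr {X Y V} F p.
Arguments lin2U {X Y V} F x y.

Variables (A : choiceType) (circ : A -> A -> zsp K A).
Local Notation h := (h1 K A).
Local Notation zs := (zsp K A).

Lemma wordM (u v : word A) : <<u>> * <<v>> = <<u ++ v>> :> h.
Proof. by rewrite malgM_def fgmulUU mulr1. Qed.
Lemma letterM x (w : word A) : letter K x * <<w>> = << x :: w >>.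
Proof. exact: wordM. Qed.
Lemma h1_one : 1 = <<[::] : word A>> :> h.
Proof. by []. Qed.

Lemma islin_mulr (p : h) : islin (fun u : h => u * p).
Proof. by move=> c u v; rewrite mulrDl scalerAl. Qed.

Lemma scalerAr_h c (p q : h) : p * (c *: q) = c *: (p * q).
Proof.
have comm : forall p : h, p * c%:MP = c%:MP * p.
  apply: islin_ext; first exact: islin_mulr.
    by move=> d u v; rewrite !mul_malgC scalerDr !scalerA mulrC.
  move=> k; rewrite !malgM_def !fgmulUU mulr1 mul1r.
  by rewrite (@mulm1 (word A)) (@mul1m (word A)).
by rewrite -mul_malgC mulrA comm -mulrA mul_malgC.
Qed.

Lemma islin_mull (p : h) : islin (fun u : h => p * u).
Proof. by move=> c u v; rewrite mulrDr scalerAr_h. Qed.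

Lemma zliftP c u v : zlift (c *: u + v) = c *: zlift u + zlift v :> h.
Proof. exact: lin_islin. Qed.
Lemma circzPl y c u v :
  circz circ (c *: u + v) y = c *: circz circ u y + circz circ v y.
Proof. exact: (lin2Pl circ y c u v). Qed.
Lemma circzPr z c u v :
  circz circ z (c *: u + v) = c *: circz circ z u + circz circ z v.
Proof. exact: (lin2Pr circ z c u v). Qed.
Lemma circ_actPl p c u v :
  circ_act circ (c *: u + v) p = c *: circ_act circ u p + circ_act circ v p.
Proof. exact: (lin2Pl (circ_w circ) p c u v). Qed.
Lemma circ_actPr z c u v :
  circ_act circ z (c *: u + v) = c *: circ_act circ z u + circ_act circ z v.
Proof. exact: (lin2Pr (circ_w circ) z c u v). Qed.
Lemma harmPl q c u v :
  harm circ (c *: u + v) q = c *: harm circ u q + harm circ v q.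
Proof. exact: (lin2Pl (harm_w circ) q c u v). Qed.
Lemma harmPr p c u v :
  harm circ p (c *: u + v) = c *: harm circ p u + harm circ p v.
Proof. exact: (lin2Pr (harm_w circ) p c u v). Qed.
Lemma SrP r c u v : Sr circ r (c *: u + v) = c *: Sr circ r u + Sr circ r v.
Proof. exact: lin_islin. Qed.

Lemma zliftU (x : A) : zlift << x >> = letter K x.
Proof. exact: linU. Qed.
Lemma circzU (x y : A) : circz circ << x >> << y >> = circ x y.
Proof. exact: lin2U. Qed.
Lemma circ_actU (x : A) (w : word A) : circ_act circ << x >> << w >> = circ_w circ x w.
Proof. exact: lin2U. Qed.
Lemma harmU (u v : word A) : harm circ << u >> << v >> = harm_w circ u v.
Proof. exact: lin2U. Qed.
Lemma SrU r (w : word A) : Sr circ r << w >> = Sr_w circ r w.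
Proof. exact: linU. Qed.

Lemma circ_act_zlift z y p :
  circ_act circ z (zlift y * p) = zlift (circz circ z y) * p.
Proof.
move: z; apply: islin_ext.
- by move=> c u v; rewrite circ_actPl.
- by move=> c u v; rewrite circzPl zliftP mulrDl scalerAl.
move=> x; move: y; apply: islin_ext.
- by move=> c u v; rewrite zliftP mulrDl -scalerAl circ_actPr.
- by move=> c u v; rewrite circzPr zliftP mulrDl -scalerAl.
move=> b; rewrite zliftU circzU; move: p; apply: islin_ext.
- by move=> c u v; rewrite mulrDr scalerAr_h circ_actPr.
- by move=> c u v; rewrite mulrDr scalerAr_h.
by move=> w; rewrite letterM circ_actU.
Qed.

Lemma circ_act1 z : circ_act circ z 1 = 0.
Proof.
move: z; apply: islin_ext.
- by move=> c u v; rewrite circ_actPl.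
- exact: islin_cst0.
by move=> x; rewrite h1_one circ_actU.
Qed.

Lemma Sr_zlift r z p :
  Sr circ r (zlift z * p) = zlift z * Sr circ r p + r *: circ_act circ z (Sr circ r p).
Proof.
move: z; apply: islin_ext.
- by move=> c u v; rewrite zliftP mulrDl -scalerAl SrP.
- apply: islin_add.
    by move=> c u v; rewrite zliftP mulrDl -scalerAl.
  by apply: islin_scale => c u v; rewrite circ_actPl.
move=> x; rewrite zliftU; move: p; apply: islin_ext.
- by move=> c u v; rewrite mulrDr scalerAr_h SrP.
- apply: islin_add.
    by move=> c u v; rewrite SrP mulrDr scalerAr_h.
  by apply: islin_scale => c u v; rewrite SrP circ_actPr.
by move=> w; rewrite letterM !SrU.
Qed.

Lemma Sr1 r : Sr circ r 1 = 1.
Proof. by rewrite h1_one SrU. Qed.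

Lemma harm1p q : harm circ 1 q = q.
Proof.
move: q; apply: islin_ext.
- by move=> c u v; rewrite harmPr.
- by move=> c u v.
by move=> v; rewrite h1_one harmU.
Qed.

Lemma harmp1 p : harm circ p 1 = p.
Proof.
move: p; apply: islin_ext.
- by move=> c u v; rewrite harmPl.
- by move=> c u v.
by move=> [|x u]; rewrite h1_one harmU.
Qed.


Lemma scalerAl' c (p q : h) : (c *: p) * q = c *: (p * q).
Proof. by rewrite scalerAl. Qed.

Ltac linsimp := let c := fresh "c" in let u := fresh "u" in let v := fresh "v" in
  move=> c u v; rewrite ?(zliftP, circzPl, circzPr, mulrDl, mulrDr, scalerAl',
     scalerAr_h, harmPl, harmPr, circ_actPl, circ_actPr, SrP).
Ltac islin_tac := repeat first [ apply: islin_sub | apply: islin_add | apply: islin_scale ]; linsimp.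

Lemma harm_zlift z y p q :
  harm circ (zlift z * p) (zlift y * q) =
  zlift z * harm circ p (zlift y * q) + zlift y * harm circ (zlift z * p) q
  + zlift (circz circ z y) * harm circ p q.
Proof.
move: z; apply: islin_ext; try by islin_tac.
move=> x; move: y; apply: islin_ext; try by islin_tac.
move=> b; move: p; apply: islin_ext; try by islin_tac.
move=> u; move: q; apply: islin_ext; try by islin_tac.
move=> v; rewrite !zliftU !letterM !harmU circzU /=.
by [].
Qed.

Lemma harm_p0 p : harm circ p 0 = 0.
Proof. exact: (islin0 (lin2Pr (harm_w circ) p)). Qed.
Lemma circ_act_islin z : islin (circ_act circ z).
Proof. exact: (lin2Pr (circ_w circ) z). Qed.
Lemma harm_islin p : islin (harm circ p).
Proof. exact: (lin2Pr (harm_w circ) p). Qed.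

Lemma addH1 (V : zmodType) (a b c d e : V) :
  (a + b + c) + (d + e - c) = (a + d) + (b + e).
Proof. by rewrite -!addrA; congr (_ + _); rewrite (addrCA c d) (addrCA c e) subrr addr0 addrCA. Qed.
Lemma addH2 (V : zmodType) (X Y Z Q : V) : X + Y + Z = X + (Q + Y + Z) - Q.
Proof. by rewrite -(addrA Q) (addrC Q) addrA addrK addrA. Qed.

Section Main.
Variables (a : zs) (r : K).
Local Notation x := (zlift a).

Lemma harm_circ_act p q :
  harm circ (x * p) (circ_act circ a q) =
  x * harm circ p (circ_act circ a q) + circ_act circ a (harm circ (x * p) q)
  - zlift (circz circ a a) * harm circ p q.
Proof.
move: q; apply: islin_ext; try by islin_tac.
move=> [|y w].
  by rewrite -h1_one circ_act1 !harmp1 !harm_p0 circ_act_zlift mulr0 add0r subrr.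
rewrite -letterM -zliftU (circ_act_zlift a << y >> << w >>).
rewrite (harm_zlift a (circz circ a << y >>) p << w >>).
rewrite (harm_zlift a << y >> p << w >>).
rewrite 2!(islinD (circ_act_islin a)) 3!circ_act_zlift.
exact: addH2.
Qed.

Definition G i m := harm circ (x ^+ i) (Sr circ 1 (x ^+ m)).

Lemma G0 m : G 0 m.+1 = x * G 0 m + circ_act circ a (G 0 m).
Proof. by rewrite /G expr0 !harm1p exprS Sr_zlift scale1r. Qed.

Lemma Gi0 i : G i.+1 0 = x * G i 0.
Proof. by rewrite /G expr0 Sr1 !harmp1 exprS. Qed.

Lemma Grec i m :
  G i.+1 m.+1 = x * G i m.+1 + (x * G i.+1 m + circ_act circ a (G i.+1 m)).
Proof.
rewrite /G !exprS Sr_zlift scale1r.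
move: (Sr circ 1 (x ^+ m)) (x ^+ i) => U X.
rewrite (islinD (harm_islin (x * X))) (islinD (harm_islin X)).
rewrite (harm_zlift a a X U) (harm_circ_act X U).
rewrite addH1.
by rewrite (mulrDr x (harm circ X (x * U))).
Qed.

Lemma Gsplit n i : (i <= n.+1)%N ->
  G i (n.+1 - i) =
  (if i is j.+1 then x * G j (n.+1 - i) else 0)
  + (if (i < n.+1)%N then x * G i (n - i) + circ_act circ a (G i (n - i)) else 0).
Proof.
case: i => [|j] Hi.
  by rewrite !subn0 /= add0r G0.
rewrite ltnS in Hi; case: (ltnP j n) => [Hjn | Hnj].
  rewrite ltnS Hjn subSS -(subnSK Hjn) Grec //.
have -> : j = n by apply/eqP; rewrite eqn_leq Hi Hnj.
by rewrite subnn ltnn addr0 Gi0.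
Qed.

Definition Q n :=
  \sum_(0 <= i < n.+1) (r ^+ (n - i) * (1 - r) ^+ i) *: G i (n - i).

Lemma Qrec n : Q n.+1 = x * Q n + r *: circ_act circ a (Q n).
Proof.
have e1 : x * Q n =
    \sum_(0 <= i < n.+1) (r ^+ (n - i) * (1 - r) ^+ i) *: (x * G i (n - i)).
  by rewrite /Q mulr_sumr; apply: eq_bigr => i _; rewrite scalerAr_h.
have e2 : circ_act circ a (Q n) =
    \sum_(0 <= i < n.+1) (r ^+ (n - i) * (1 - r) ^+ i) *: circ_act circ a (G i (n - i)).
  rewrite /Q (islin_sum (circ_act_islin a)); apply: eq_bigr => i _.
  by rewrite (islinZ (circ_act_islin a)).
rewrite /Q (eq_big_nat _ _ (F2 := fun i =>
   (r ^+ (n.+1 - i) * (1 - r) ^+ i) *: (if i is j.+1 then x * G j (n.+1 - i) else 0)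
 + (r ^+ (n.+1 - i) * (1 - r) ^+ i) *:
      (if (i < n.+1)%N then x * G i (n - i) + circ_act circ a (G i (n - i)) else 0))); last first.
  by move=> i /andP[_ Hi]; rewrite Gsplit // scalerDr.
rewrite big_split /= big_nat_recl // [in X in _ + X = _]big_nat_recr //= ltnn !scaler0 add0r addr0.
have -> : \sum_(0 <= i < n.+1)
    (r ^+ (n.+1 - i.+1) * (1 - r) ^+ i.+1) *: (x * G i (n.+1 - i.+1))
  = (1 - r) *: (x * Q n).
  rewrite e1 scaler_sumr; apply: eq_bigr => i _.
  by rewrite subSS scalerA exprS mulrCA.
have -> : \sum_(0 <= i < n.+1) (r ^+ (n.+1 - i) * (1 - r) ^+ i) *:
      (if (i < n.+1)%N then x * G i (n - i) + circ_act circ a (G i (n - i)) else 0)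
  = r *: (x * Q n + circ_act circ a (Q n)).
  rewrite e1 e2 -big_split scaler_sumr; apply: eq_big_nat => i /andP[_ Hi].
  by rewrite Hi subSn // exprS /= -scalerDr scalerA mulrA.
by rewrite -/(Q n) scalerDr addrA -scalerDl subrK scale1r.
Qed.

Lemma T_eq_Q n : Sr circ r (x ^+ n) = Q n.
Proof.
elim: n => [|n IH].
  by rewrite /Q big_nat1 expr0 Sr1 /G expr0 Sr1 harm1p mulr1 scale1r.
by rewrite exprS Sr_zlift IH Qrec.
Qed.

Lemma main_gen n : Sr circ r (x ^+ n) =
  \sum_(i < n.+1) (r ^+ (n - i) * (1 - r) ^+ i) *:
      harm circ (x ^+ i) (Sr circ 1 (x ^+ (n - i))).
Proof. by rewrite T_eq_Q /Q big_mkord. Qed.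
End Main.
End Gen.

Theorem proposition2p3
  (R : comRingType)
  (RQalg : forall m : nat, exists y : R, y * (m.+1)%:R = 1)
  (A : choiceType) (circ : A -> A -> zsp R A)
  (circC : forall z1 z2 : zsp R A, circz circ z1 z2 = circz circ z2 z1)
  (circA : forall z1 z2 z3 : zsp R A,
     circz circ (circz circ z1 z2) z3 = circz circ z1 (circz circ z2 z3))
  (a : zsp R A) (n : nat) (hn : (0 < n)%N) :
  let c := polycirc circ in
  let ah : h1 {poly R} A := zlift (polyz a) in
  Sr c 'X (ah ^+ n)
  = \sum_(i < n.+1)
      ('X ^+ (n - i) * (1 - 'X) ^+ i) *: harm c (ah ^+ i) (Sr c 1 (ah ^+ (n - i))).
Proof.
move=> c ah.
exact: (@main_gen _ _ (polycirc circ) (polyz a) 'X n).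
Qed.
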